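(* Let $m\in\mathbb{N}^+$ and $p\in(1,p_S)$. Then $$|u^{(m)}_p(x)|\leq \frac{M^{(m)}_{0,p}}{\Big[1+\frac{(M^{(m)}_{0,p})^{p-1}}{N(N-2)}|x|^2\Big]^{\frac{N-2}{2}}}\qquad\text{for all }x\in B^{(m)}_{0,p}.$$
   Context: Standing setting: $N\geq3$, $B$ unit ball of $\mathbb{R}^N$ centered at $0$, $p_S=\frac{N+2}{N-2}$. $u^{(m)}_p$ is the unique radial solution of $-\Delta u=|u|^{p-1}u$ in $B$, $u=0$ on $\partial B$, with exactly $m$ nodal regions and $u^{(m)}_p(0)>0$. $r^{(m)}_{1,p}$ is its first nodal radius if $m\geq2$ and $r^{(m)}_{1,p}=1$ if $m=1$; $B^{(m)}_{0,p}=\{|x|<r^{(m)}_{1,p}\}$; $M^{(m)}_{0,p}=u^{(m)}_p(0)=\max_{B^{(m)}_{0,p}}|u^{(m)}_p|$. *)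

(* Defs.v *)
From Stdlib Require Import Reals Lra Lia.
Open Scope R_scope.

(* Points of R^N are represented as functions nat -> R; only the first N
   coordinates (indices 0..N-1) are ever used. *)
Definition pt := nat -> R.

Fixpoint rsum (n : nat) (f : nat -> R) : R :=
  match n with
  | O => 0
  | S k => rsum k f + f k
  end.

Definition normN (N : nat) (x : pt) : R := sqrt (rsum N (fun i => x i ^ 2)).

Definition distN (N : nat) (x y : pt) : R := normN N (fun k => y k - x k).

Definition origin : pt := fun _ => 0.

Definition shift (x : pt) (i : nat) (t : R) : pt :=
  fun k => if Nat.eqb k i then x k + t else x k.

Definition partial_at (f : pt -> R) (i : nat) (x : pt) (l : R) : Prop :=
  derivable_pt_lim (fun t => f (shift x i t)) 0 l.

Definition in_ball (N : nat) (x : pt) : Prop := normN N x < 1.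
Definition in_cball (N : nat) (x : pt) : Prop := normN N x <= 1.

Definition contN_at (N : nat) (f : pt -> R) (x : pt) : Prop :=
  forall eps, eps > 0 -> exists delta, delta > 0 /\
    forall y, distN N x y < delta -> Rabs (f y - f x) < eps.

Definition contN_cball_at (N : nat) (f : pt -> R) (x : pt) : Prop :=
  forall eps, eps > 0 -> exists delta, delta > 0 /\
    forall y, in_cball N y -> distN N x y < delta -> Rabs (f y - f x) < eps.

(* Classical solution of  -Δu = |u|^{p-1} u  in B,  u = 0 on ∂B. *)
Definition is_LE_solution (N : nat) (p : R) (u : pt -> R) : Prop :=
  (forall x, normN N x = 1 -> u x = 0) /\
  (forall x, in_cball N x -> contN_cball_at N u x) /\
  exists (d1 : nat -> pt -> R) (d2 : nat -> nat -> pt -> R),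
    forall x, in_ball N x ->
      (forall i j, (i < N)%nat -> (j < N)%nat ->
        partial_at u i x (d1 i x) /\
        partial_at (d1 i) j x (d2 i j x) /\
        contN_at N (d2 i j) x) /\
      - rsum N (fun i => d2 i i x) = Rpower (Rabs (u x)) (p - 1) * u x.

Definition radial (N : nat) (u : pt -> R) : Prop :=
  exists phi : R -> R, forall x, u x = phi (normN N x).

Definition path_connected_in (N : nat) (S : pt -> Prop) (x y : pt) : Prop :=
  exists g : R -> pt,
    (forall i, (i < N)%nat -> continuity (fun t => g t i)) /\
    (forall i, (i < N)%nat -> g 0 i = x i /\ g 1 i = y i) /\
    (forall t, 0 <= t <= 1 -> S (g t)).

Definition nodal_set (N : nat) (u : pt -> R) : pt -> Prop :=
  fun x => in_ball N x /\ u x <> 0.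

(* {u ≠ 0} ∩ B has exactly m connected (= path-connected, the set being open)
   components *)
Definition num_nodal_regions (N : nat) (u : pt -> R) (m : nat) : Prop :=
  exists reps : nat -> pt,
    (forall k, (k < m)%nat -> nodal_set N u (reps k)) /\
    (forall k l, (k < m)%nat -> (l < m)%nat -> k <> l ->
       ~ path_connected_in N (nodal_set N u) (reps k) (reps l)) /\
    (forall x, nodal_set N u x ->
       exists k, (k < m)%nat /\ path_connected_in N (nodal_set N u) x (reps k)).

Definition first_nodal_radius (N : nat) (u : pt -> R) (m : nat) (r1 : R) : Prop :=
  (m = 1%nat /\ r1 = 1) \/
  ((2 <= m)%nat /\ 0 < r1 < 1 /\
   (forall x, normN N x < r1 -> u x <> 0) /\
   (forall x, normN N x = r1 -> u x = 0)).

Definition p_S (N : nat) : R := (INR N + 2) / (INR N - 2).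

(* Main.v *)
Require Import Defs.
From Stdlib Require Import Reals.
From Stdlib Require Import Lra Lia FunctionalExtensionality Classical.
Open Scope R_scope.


Definition contR (f : R -> R) (x : R) : Prop :=
  forall eps, eps > 0 -> exists delta, delta > 0 /\
    forall y, Rabs (y - x) < delta -> Rabs (f y - f x) < eps.

Lemma contR_pt f x : contR f x <-> continuity_pt f x.
Proof.
  unfold contR, continuity_pt, continue_in, limit1_in, limit_in, D_x, no_cond; simpl;
  unfold R_dist; split.
  - intros H eps Heps. destruct (H eps Heps) as [d [Hd H1]].
    exists d; split; auto. intros y [_ Hy]; auto.
  - intros H eps Heps. destruct (H eps Heps) as [d [Hd H1]].
    exists d; split; auto. intros y Hy.
    destruct (Req_dec y x) as [->|Hne].
    + rewrite Rminus_diag, Rabs_R0; lra.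
    + apply H1; split; auto.
Qed.

Lemma D_cont f x l : derivable_pt_lim f x l -> contR f x.
Proof.
  intro H. apply contR_pt. apply derivable_continuous_pt. exists l; exact H.
Qed.

Lemma D_mul f g x a b : derivable_pt_lim f x a -> derivable_pt_lim g x b ->
  derivable_pt_lim (fun t => f t * g t) x (a * g x + f x * b).
Proof. intros; apply (derivable_pt_lim_mult f g x a b); auto. Qed.

Lemma D_plus f g x a b : derivable_pt_lim f x a -> derivable_pt_lim g x b ->
  derivable_pt_lim (fun t => f t + g t) x (a + b).
Proof. intros; apply (derivable_pt_lim_plus f g x a b); auto. Qed.

Lemma D_minus f g x a b : derivable_pt_lim f x a -> derivable_pt_lim g x b ->
  derivable_pt_lim (fun t => f t - g t) x (a - b).
Proof. intros; apply (derivable_pt_lim_minus f g x a b); auto. Qed.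

Lemma D_const c x : derivable_pt_lim (fun _ => c) x 0.
Proof. apply derivable_pt_lim_const. Qed.

Lemma D_id x : derivable_pt_lim (fun t => t) x 1.
Proof. apply derivable_pt_lim_id. Qed.

Lemma D_comp f g x a b : derivable_pt_lim g x b -> derivable_pt_lim f (g x) a ->
  derivable_pt_lim (fun t => f (g t)) x (a * b).
Proof. intros; apply (derivable_pt_lim_comp g f x b a); auto. Qed.

Lemma D_pow f x a n : derivable_pt_lim f x a ->
  derivable_pt_lim (fun t => f t ^ n) x (INR n * f x ^ Nat.pred n * a).
Proof. intros; apply (D_comp (fun y => y ^ n) f); auto. apply derivable_pt_lim_pow. Qed.

Lemma D_rpow f x a y : f x > 0 -> derivable_pt_lim f x a ->
  derivable_pt_lim (fun t => Rpower (f t) y) x (y * Rpower (f x) (y - 1) * a).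
Proof. intros; apply (D_comp (fun z => Rpower z y) f); auto. apply derivable_pt_lim_power; auto. Qed.

Lemma D_div f g x a b : g x <> 0 -> derivable_pt_lim f x a -> derivable_pt_lim g x b ->
  derivable_pt_lim (fun t => f t / g t) x ((a * g x - b * f x) / (g x)^2).
Proof.
  intros Hg Hf Hgd. replace ((g x)^2) with (Rsqr (g x)) by (unfold Rsqr; ring).
  apply (derivable_pt_lim_div f g x a b); auto.
Qed.

Lemma D_ext f g x l delta : delta > 0 -> (forall t, Rabs (t - x) < delta -> f t = g t) ->
  derivable_pt_lim f x l -> derivable_pt_lim g x l.
Proof.
  intros Hd Heq H eps Heps. destruct (H eps Heps) as [d Hd'].
  assert (Hm : 0 < Rmin d delta) by (apply Rmin_pos; [apply cond_pos| lra]).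
  exists (mkposreal _ Hm). intros h Hh Hh2. simpl in Hh2.
  rewrite <- (Heq (x + h)), <- (Heq x).
  - apply Hd'; auto. apply Rlt_le_trans with (1:=Hh2), Rmin_l.
  - rewrite Rminus_diag, Rabs_R0; lra.
  - replace (x + h - x) with h by ring. apply Rlt_le_trans with (1:=Hh2), Rmin_r.
Qed.

Lemma D_shift f r l : derivable_pt_lim (fun t => f (r + t)) 0 l -> derivable_pt_lim f r l.
Proof.
  intros H eps Heps. destruct (H eps Heps) as [d Hd]. exists d. intros h Hh Hh2.
  specialize (Hd h Hh Hh2). replace (r + (0 + h)) with (r + h) in Hd by ring.
  replace (r + 0) with r in Hd by ring. exact Hd.
Qed.

Lemma D_unshift f r l : derivable_pt_lim f r l -> derivable_pt_lim (fun t => f (r + t)) 0 l.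
Proof.
  intros H eps Heps. destruct (H eps Heps) as [d Hd]. exists d. intros h Hh Hh2.
  replace (r + (0 + h)) with (r + h) by ring. replace (r + 0) with r by ring. auto.
Qed.

Lemma mono_le h h' a b : a <= b ->
  (forall c, a <= c <= b -> derivable_pt_lim h c (h' c)) ->
  (forall c, a < c < b -> 0 <= h' c) -> h a <= h b.
Proof.
  intros Hab Hd Hp. destruct (Rle_lt_or_eq_dec _ _ Hab) as [Hlt| Heq]; [|subst; lra].
  destruct (MVT_cor2 h h' a b Hlt Hd) as [c [Hc Hc2]].
  specialize (Hp c Hc2). nra.
Qed.

Lemma mono_lt h h' a b : a < b ->
  (forall c, a <= c <= b -> derivable_pt_lim h c (h' c)) ->
  (forall c, a < c < b -> h' c < 0) -> h b < h a.
Proof.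
  intros Hab Hd Hp.
  destruct (MVT_cor2 h h' a b Hab Hd) as [c [Hc Hc2]].
  specialize (Hp c Hc2). nra.
Qed.

Lemma mono_ge h h' a b : a <= b ->
  (forall c, a <= c <= b -> derivable_pt_lim h c (h' c)) ->
  (forall c, a < c < b -> h' c <= 0) -> h b <= h a.
Proof.
  intros Hab Hd Hp. destruct (Rle_lt_or_eq_dec _ _ Hab) as [Hlt| Heq]; [|subst; lra].
  destruct (MVT_cor2 h h' a b Hlt Hd) as [c [Hc Hc2]].
  specialize (Hp c Hc2). nra.
Qed.

Lemma Rpower_pos x y : 0 < Rpower x y.
Proof. unfold Rpower. apply exp_pos. Qed.

Lemma D_eq f x l l' : derivable_pt_lim f x l -> l = l' -> derivable_pt_lim f x l'.
Proof. intros H ->; auto. Qed.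

Lemma Rpower_opp x y : Rpower x (- y) = / Rpower x y.
Proof.
  assert (H : Rpower x (- y) * Rpower x y = 1).
  { rewrite <- Rpower_plus. replace (- y + y) with 0 by ring. unfold Rpower.
    rewrite Rmult_0_l. apply exp_0. }
  pose proof (Rpower_pos x y).
  apply Rmult_eq_reg_r with (Rpower x y); [|lra]. rewrite H, Rinv_l; lra.
Qed.


Definition ray (r : R) : pt := fun k => if Nat.eqb k 0 then r else 0.

Lemma rsum_ext n f g : (forall k, (k < n)%nat -> f k = g k) -> rsum n f = rsum n g.
Proof.
  induction n; simpl; intros H; auto.
  rewrite IHn by (intros; apply H; lia). rewrite H by lia. reflexivity.
Qed.

Lemma rsum_plus n f g : rsum n (fun k => f k + g k) = rsum n f + rsum n g.
Proof. induction n; simpl; [ring|rewrite IHn; ring]. Qed.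

Lemma rsum_zero n f : (forall k, (k < n)%nat -> f k = 0) -> rsum n f = 0.
Proof.
  induction n; simpl; intros H; auto.
  rewrite IHn by (intros; apply H; lia). rewrite H by lia. ring.
Qed.

Lemma rsum_single n f j : (j < n)%nat -> (forall k, (k < n)%nat -> k <> j -> f k = 0) ->
  rsum n f = f j.
Proof.
  induction n; intros Hj H; [lia|]. simpl.
  destruct (Nat.eq_dec j n) as [->|Hne].
  - rewrite rsum_zero; [ring|]. intros k Hk; apply H; lia.
  - rewrite IHn by (try lia; intros; apply H; lia). rewrite (H n) by lia. ring.
Qed.

Lemma rsum_split n f B : (1 <= n)%nat -> (forall k, (0 < k < n)%nat -> f k = B) ->
  rsum n f = f 0%nat + INR (n - 1) * B.
Proof.
  induction n; intros Hn H; [lia|]. simpl.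
  destruct n.
  - simpl. ring.
  - rewrite IHn by (try lia; intros; apply H; lia). rewrite (H (S n)) by lia.
    replace (S n - 0)%nat with (S n) by lia. replace (S (S n) - 1)%nat with (S n) by lia.
    replace (S n - 1)%nat with n by lia. rewrite (S_INR n). ring.
Qed.

Lemma rsum_nonneg n f : (forall k, (k < n)%nat -> 0 <= f k) -> 0 <= rsum n f.
Proof.
  induction n; simpl; intros H; [lra|].
  pose proof (H n ltac:(lia)). assert (0 <= rsum n f) by (apply IHn; intros; apply H; lia). lra.
Qed.

Lemma normN_nonneg N x : 0 <= normN N x.
Proof. unfold normN. apply sqrt_pos. Qed.

Lemma normN_ext N x y : (forall k, (k < N)%nat -> x k = y k) -> normN N x = normN N y.
Proof. intros H. unfold normN. f_equal. apply rsum_ext. intros; rewrite H; auto. Qed.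

Lemma sqrt_sq_abs r : sqrt (r ^ 2) = Rabs r.
Proof. rewrite <- sqrt_Rsqr_abs. f_equal. unfold Rsqr; ring. Qed.

Lemma normN_ray N r : (1 <= N)%nat -> normN N (ray r) = Rabs r.
Proof.
  intros HN. unfold normN. rewrite (rsum_single N _ 0).
  - unfold ray; simpl. apply sqrt_sq_abs.
  - lia.
  - intros k _ Hk. unfold ray; destruct (Nat.eqb_spec k 0); [lia|]; ring.
Qed.

Lemma normN_shift_ray N r i y : (0 < i < N)%nat ->
  normN N (shift (ray r) i y) = sqrt (r ^ 2 + y ^ 2).
Proof.
  intros Hi. unfold normN. f_equal.
  rewrite (rsum_ext N _ (fun k => (if Nat.eqb k 0 then r^2 else 0) + (if Nat.eqb k i then y^2 else 0))).
  - rewrite rsum_plus. rewrite (rsum_single N _ 0), (rsum_single N _ i); try lia.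
    + simpl. rewrite Nat.eqb_refl. reflexivity.
    + intros k _ Hk. destruct (Nat.eqb_spec k i); [lia|reflexivity].
    + intros k _ Hk. destruct (Nat.eqb_spec k 0); [lia|reflexivity].
  - intros k Hk. unfold shift, ray.
    destruct (Nat.eqb_spec k i), (Nat.eqb_spec k 0); subst; try lia; ring.
Qed.

Lemma normN_shift_origin N i y : (i < N)%nat -> normN N (shift origin i y) = Rabs y.
Proof.
  intros Hi. unfold normN.
  rewrite (rsum_single N _ i).
  2: lia.
  2: intros k _ Hk; unfold shift, origin; destruct (Nat.eqb_spec k i); [lia|]; ring.
  unfold shift, origin. rewrite Nat.eqb_refl. rewrite Rplus_0_l. apply sqrt_sq_abs.
Qed.

Lemma origin_ray : origin = ray 0.
Proof. apply functional_extensionality; intros k; unfold origin, ray; destruct (Nat.eqb k 0); auto. Qed.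

Lemma shift_shift x i t s : shift (shift x i t) i s = shift x i (t + s).
Proof.
  apply functional_extensionality; intros k; unfold shift.
  destruct (Nat.eqb k i); ring.
Qed.

Lemma shift_ray0 r t : shift (ray r) 0 t = ray (r + t).
Proof.
  apply functional_extensionality; intros k; unfold shift, ray.
  destruct (Nat.eqb k 0); ring.
Qed.


Definition HDer (N : nat) (p : R) (u : pt -> R) (d1 : nat -> pt -> R) (d2 : nat -> nat -> pt -> R) :=
  forall x, in_ball N x ->
      (forall i j, (i < N)%nat -> (j < N)%nat ->
        partial_at u i x (d1 i x) /\
        partial_at (d1 i) j x (d2 i j x) /\
        contN_at N (d2 i j) x) /\
      - rsum N (fun i => d2 i i x) = Rpower (Rabs (u x)) (p - 1) * u x.

Definition HRad (N : nat) (u : pt -> R) := forall x, u x = u (ray (normN N x)).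

Lemma phi_even N u r : (1 <= N)%nat -> HRad N u -> u (ray (- r)) = u (ray r).
Proof.
  intros HN H. rewrite (H (ray (-r))), (H (ray r)), !normN_ray by auto.
  rewrite Rabs_Ropp. reflexivity.
Qed.

Lemma phi_abs N u r : (1 <= N)%nat -> HRad N u -> u (ray (Rabs r)) = u (ray r).
Proof.
  intros HN H. destruct (Rle_or_lt 0 r).
  - rewrite Rabs_pos_eq; auto.
  - rewrite Rabs_left by auto. apply (phi_even N); auto.
Qed.

Lemma u_shift_origin N u i y : (i < N)%nat -> HRad N u -> u (shift origin i y) = u (ray y).
Proof.
  intros Hi H. rewrite H, normN_shift_origin by auto. apply (phi_abs N); auto; lia.
Qed.

Lemma u_shift_ray N u r i y : (0 < i < N)%nat -> HRad N u ->
  u (shift (ray r) i y) = u (ray (sqrt (r ^ 2 + y ^ 2))).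
Proof. intros Hi H. rewrite H, normN_shift_ray by auto. reflexivity. Qed.

Lemma in_ball_ray N r : (1 <= N)%nat -> Rabs r < 1 -> in_ball N (ray r).
Proof. intros. unfold in_ball. rewrite normN_ray; auto. Qed.

Lemma dphi N p u d1 d2 r : (1 <= N)%nat -> HDer N p u d1 d2 -> Rabs r < 1 ->
  derivable_pt_lim (fun s => u (ray s)) r (d1 0%nat (ray r)).
Proof.
  intros HN HD Hr. destruct (HD (ray r) (in_ball_ray N r HN Hr)) as [H _].
  destruct (H 0%nat 0%nat ltac:(lia) ltac:(lia)) as [H1 _].
  unfold partial_at in H1. apply D_shift.
  replace (fun t => u (ray (r + t))) with (fun t => u (shift (ray r) 0 t)); auto.
  apply functional_extensionality; intros t; rewrite shift_ray0; auto.
Qed.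

Lemma dD1 N p u d1 d2 r : (1 <= N)%nat -> HDer N p u d1 d2 -> Rabs r < 1 ->
  derivable_pt_lim (fun s => d1 0%nat (ray s)) r (d2 0%nat 0%nat (ray r)).
Proof.
  intros HN HD Hr. destruct (HD (ray r) (in_ball_ray N r HN Hr)) as [H _].
  destruct (H 0%nat 0%nat ltac:(lia) ltac:(lia)) as [_ [H1 _]].
  unfold partial_at in H1. apply D_shift.
  replace (fun t => d1 0%nat (ray (r + t))) with (fun t => d1 0%nat (shift (ray r) 0 t)); auto.
  apply functional_extensionality; intros t; rewrite shift_ray0; auto.
Qed.

Lemma D1_0 N p u d1 d2 : (1 <= N)%nat -> HDer N p u d1 d2 -> HRad N u ->
  d1 0%nat (ray 0) = 0.
Proof.
  intros HN HD HR.
  assert (H0 : Rabs 0 < 1) by (rewrite Rabs_R0; lra).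
  pose proof (dphi N p u d1 d2 0 HN HD H0) as H1.
  assert (H2 : derivable_pt_lim (fun t => u (ray (- t))) 0 (d1 0%nat (ray 0) * -1)).
  { apply (D_comp (fun s => u (ray s)) (fun t => - t)).
    - apply derivable_pt_lim_opp; apply derivable_pt_lim_id.
    - rewrite Ropp_0. auto. }
  replace (fun t => u (ray (- t))) with (fun t => u (ray t)) in H2.
  - pose proof (uniqueness_limite _ _ _ _ H1 H2). lra.
  - apply functional_extensionality; intros t; rewrite (phi_even N); auto.
Qed.

Lemma d2_origin N p u d1 d2 i : (1 <= N)%nat -> (i < N)%nat -> HDer N p u d1 d2 -> HRad N u ->
  d2 i i origin = d2 0%nat 0%nat (ray 0).
Proof.
  intros HN Hi HD HR.
  assert (Hd1 : forall t, Rabs t < 1 -> d1 i (shift origin i t) = d1 0%nat (ray t)).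
  { intros t Ht.
    assert (Hb : in_ball N (shift origin i t)) by (unfold in_ball; rewrite normN_shift_origin; auto).
    destruct (HD _ Hb) as [H _]. destruct (H i i Hi Hi) as [H1 _].
    unfold partial_at in H1.
    replace (fun t0 => u (shift (shift origin i t) i t0)) with (fun s => u (ray (t + s))) in H1.
    - apply (uniqueness_limite (fun s => u (ray (t + s))) 0); auto.
      apply (D_unshift (fun s => u (ray s)) t). apply (dphi N p u d1 d2); auto.
    - apply functional_extensionality; intros s. rewrite shift_shift, (u_shift_origin N); auto. }
  assert (Hb : in_ball N origin) by (unfold in_ball; rewrite origin_ray, normN_ray by auto; rewrite Rabs_R0; lra).
  destruct (HD _ Hb) as [H _]. destruct (H i i Hi Hi) as [_ [H1 _]].
  unfold partial_at in H1.
  apply (uniqueness_limite (fun t => d1 i (shift origin i t)) 0); auto.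
  apply (D_ext (fun s => d1 0%nat (ray s)) _ 0 _ 1); [lra| |].
  - intros t Ht. rewrite Rminus_0_r in Ht. rewrite Hd1; auto.
  - apply (dD1 N p u d1 d2); auto. rewrite Rabs_R0; lra.
Qed.


Lemma D_rho r t : 0 < r ^ 2 + t ^ 2 ->
  derivable_pt_lim (fun y => sqrt (r ^ 2 + y ^ 2)) t (t / sqrt (r ^ 2 + t ^ 2)).
Proof.
  intros Hp. assert (Hs : 0 < sqrt (r ^ 2 + t ^ 2)) by (apply sqrt_lt_R0; auto).
  eapply D_eq.
  - apply (D_comp sqrt (fun y => r ^ 2 + y ^ 2)).
    + apply D_plus; [apply D_const| apply D_pow, D_id].
    + apply derivable_pt_lim_sqrt; auto.
  - replace (INR 2) with 2 by (simpl; ring). simpl Nat.pred. field. lra.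
Qed.

Lemma rho_bound r t : 0 < r < 1 -> Rabs t < 1 - r ->
  0 < sqrt (r ^ 2 + t ^ 2) /\ sqrt (r ^ 2 + t ^ 2) < 1.
Proof.
  intros Hr Ht. assert (t ^ 2 < (1 - r) ^ 2).
  { rewrite <- (pow2_abs t). pose proof (Rabs_pos t). nra. }
  split.
  - apply sqrt_lt_R0. nra.
  - rewrite <- sqrt_1. apply sqrt_lt_1_alt. split; nra.
Qed.

Lemma d2_ray N p u d1 d2 r i : (1 <= N)%nat -> 0 < r < 1 -> (0 < i < N)%nat ->
  HDer N p u d1 d2 -> HRad N u -> d2 i i (ray r) = d1 0%nat (ray r) / r.
Proof.
  intros HN Hr Hi HD HR.
  set (rho := fun y => sqrt (r ^ 2 + y ^ 2)).
  assert (HB : forall t, Rabs t < 1 - r ->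
     d1 i (shift (ray r) i t) = d1 0%nat (ray (rho t)) * (t / rho t)).
  { intros t Ht. destruct (rho_bound r t Hr Ht) as [Hr1 Hr2].
    assert (Hb : in_ball N (shift (ray r) i t)) by (unfold in_ball; rewrite normN_shift_ray; auto).
    destruct (HD _ Hb) as [H _]. destruct (H i i ltac:(lia) ltac:(lia)) as [H1 _].
    unfold partial_at in H1.
    replace (fun t0 => u (shift (shift (ray r) i t) i t0)) with (fun s => u (ray (rho (t + s)))) in H1.
    - apply (uniqueness_limite (fun s => u (ray (rho (t + s)))) 0); auto.
      apply (D_unshift (fun s => u (ray (rho s))) t).
      apply (D_comp (fun z => u (ray z)) rho).
      + apply D_rho. unfold rho in Hr1. apply sqrt_lt_0_alt. rewrite sqrt_0. auto.
      + apply (dphi N p u d1 d2); auto. unfold rho. rewrite Rabs_pos_eq; lra.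
    - apply functional_extensionality; intros s. rewrite shift_shift, (u_shift_ray N); auto. }
  assert (Hb : in_ball N (ray r)) by (apply in_ball_ray; auto; rewrite Rabs_pos_eq; lra).
  destruct (HD _ Hb) as [H _]. destruct (H i i ltac:(lia) ltac:(lia)) as [_ [H1 _]].
  unfold partial_at in H1.
  apply (uniqueness_limite (fun t => d1 i (shift (ray r) i t)) 0); auto.
  assert (Hrho0 : rho 0 = r).
  { unfold rho. replace (r ^ 2 + 0 ^ 2) with (r ^ 2) by ring. rewrite sqrt_sq_abs, Rabs_pos_eq; lra. }
  assert (Hk : exists kd, derivable_pt_lim (fun t => d1 0%nat (ray (rho t)) / rho t) 0 kd).
  { eexists. apply D_div.
    - rewrite Hrho0; lra.
    - apply (D_comp (fun z => d1 0%nat (ray z)) rho).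
      + apply D_rho. nra.
      + apply (dD1 N p u d1 d2); auto. rewrite Hrho0, Rabs_pos_eq; lra.
    - apply D_rho. nra. }
  destruct Hk as [kd Hk].
  apply (D_ext (fun t => t * (d1 0%nat (ray (rho t)) / rho t)) _ 0 _ (1 - r)); [lra| |].
  - intros t Ht. rewrite Rminus_0_r in Ht. rewrite HB; auto. unfold Rdiv; ring.
  - eapply D_eq. apply D_mul; [apply D_id| apply Hk]. cbv beta. rewrite Hrho0. ring.
Qed.

Lemma ode_ray N p u d1 d2 r : (1 <= N)%nat -> 0 < r < 1 ->
  HDer N p u d1 d2 -> HRad N u ->
  - (d2 0%nat 0%nat (ray r) + INR (N - 1) * (d1 0%nat (ray r) / r))
   = Rpower (Rabs (u (ray r))) (p - 1) * u (ray r).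
Proof.
  intros HN Hr HD HR.
  assert (Hb : in_ball N (ray r)) by (apply in_ball_ray; auto; rewrite Rabs_pos_eq; lra).
  destruct (HD _ Hb) as [_ H]. rewrite <- H. f_equal.
  symmetry. apply rsum_split; auto. intros k Hk. apply (d2_ray N p u); auto.
Qed.

Lemma ode_0 N p u d1 d2 : (1 <= N)%nat ->
  HDer N p u d1 d2 -> HRad N u ->
  - (INR N * d2 0%nat 0%nat (ray 0))
   = Rpower (Rabs (u (ray 0))) (p - 1) * u (ray 0).
Proof.
  intros HN HD HR.
  assert (Hb : in_ball N origin) by (unfold in_ball; rewrite origin_ray, normN_ray by auto; rewrite Rabs_R0; lra).
  destruct (HD _ Hb) as [_ H]. rewrite <- origin_ray, <- H. f_equal.
  rewrite (rsum_split N _ (d2 0%nat 0%nat (ray 0))); auto.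
  - rewrite (d2_origin N p u d1 d2 0) by (try lia; auto).
    replace (INR N) with (INR (N - 1) + 1).
    + ring.
    + rewrite <- S_INR. f_equal. lia.
  - intros k Hk. apply (d2_origin N p u d1 d2); auto. lia.
Qed.


Definition ODEhyp (k : nat) (n p : R) (phi D1 D2 : R -> R) : Prop :=
  n = INR (S (S (S k))) /\
  (forall r, Rabs r < 1 -> derivable_pt_lim phi r (D1 r)) /\
  (forall r, Rabs r < 1 -> derivable_pt_lim D1 r (D2 r)) /\
  D1 0 = 0 /\
  (forall r, 0 < r < 1 -> - (D2 r + (n - 1) * (D1 r / r)) = Rpower (Rabs (phi r)) (p - 1) * phi r) /\
  - (n * D2 0) = Rpower (Rabs (phi 0)) (p - 1) * phi 0.

Lemma D1_neg k n p phi D1 D2 r : ODEhyp k n p phi D1 D2 -> 0 < phi 0 -> 0 < r < 1 ->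
  (forall c, 0 <= c <= r -> 0 <= phi c) -> D1 r < 0.
Proof.
  intros [Hn [Hphi [HD1 [H10 [Hode Hode0]]]]] H0 Hr Hnn.
  set (W := fun c => c ^ (S (S k)) * D1 c).
  set (Wd := fun c => INR (S (S k)) * c ^ (S k) * 1 * D1 c + c ^ (S (S k)) * D2 c).
  assert (HWd : forall c, Rabs c < 1 -> derivable_pt_lim W c (Wd c)).
  { intros c Hc. unfold W, Wd. apply D_mul; [|auto]. apply (D_pow (fun t => t)). apply D_id. }
  assert (HWv : forall c, 0 < c < 1 -> Wd c = - c ^ (S (S k)) * (Rpower (Rabs (phi c)) (p - 1) * phi c)).
  { intros c Hc. rewrite <- Hode by auto. unfold Wd.
    replace (INR (S (S k))) with (n - 1) by (rewrite Hn, (S_INR (S (S k))); ring).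
    cbn [pow]. field. lra. }
  assert (Hab : forall c, 0 <= c <= r -> Rabs c < 1) by (intros c Hc; rewrite Rabs_pos_eq; lra).
  destruct (D_cont _ _ _ (Hphi 0 ltac:(rewrite Rabs_R0; lra)) (phi 0) H0) as [d [Hd Hd']].
  set (t := Rmin (d / 2) r).
  assert (Ht : 0 < t <= r) by (unfold t; split; [apply Rmin_pos; lra| apply Rmin_r]).
  assert (Htd : t < d) by (unfold t; apply Rle_lt_trans with (d/2); [apply Rmin_l| lra]).
  assert (HW1 : W t < W 0).
  { apply (mono_lt W Wd 0 t); [lra| |].
    - intros c Hc; apply HWd; apply Hab; lra.
    - intros c Hc. rewrite HWv by lra.
      assert (Hpc : 0 < phi c).
      { specialize (Hd' c ltac:(rewrite Rminus_0_r, Rabs_pos_eq; lra)).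
        apply Rabs_def2 in Hd'. lra. }
      pose proof (Rpower_pos (Rabs (phi c)) (p - 1)).
      assert (0 < c ^ (S (S k))) by (apply pow_lt; lra).
      assert (0 < c ^ S (S k) * (Rpower (Rabs (phi c)) (p - 1) * phi c)) by
        (apply Rmult_lt_0_compat; [auto| apply Rmult_lt_0_compat; auto]).
      lra. }
  assert (HW2 : W r <= W t).
  { apply (mono_ge W Wd t r); [lra| |].
    - intros c Hc; apply HWd; apply Hab; lra.
    - intros c Hc. rewrite HWv by lra.
      pose proof (Rpower_pos (Rabs (phi c)) (p - 1)). pose proof (Hnn c ltac:(lra)).
      assert (0 < c ^ (S (S k))) by (apply pow_lt; lra).
      assert (0 <= c ^ S (S k) * (Rpower (Rabs (phi c)) (p - 1) * phi c)) by
        (apply Rmult_le_pos; [lra| apply Rmult_le_pos; lra]).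
      lra. }
  assert (HW0 : W 0 = 0) by (unfold W; simpl; ring).
  rewrite HW0 in HW1. unfold W in HW1, HW2. assert (0 < r ^ (S (S k))) by (apply pow_lt; lra).
  destruct (Rlt_or_le (D1 r) 0); auto.
  assert (0 <= r ^ S (S k) * D1 r) by (apply Rmult_le_pos; lra). lra.
Qed.

Lemma n_ge3 k n : n = INR (S (S (S k))) -> 3 <= n.
Proof. intros ->. rewrite !S_INR. pose proof (pos_INR k). lra. Qed.

Lemma Rpower_abs_mul x p : 0 < x -> Rpower (Rabs x) (p - 1) * x = Rpower x p.
Proof.
  intros Hx. rewrite Rabs_pos_eq by lra.
  replace p with ((p - 1) + 1) at 2 by ring. rewrite Rpower_plus, Rpower_1; auto.
Qed.

Definition Qf (k : nat) (n p : R) (phi D1 : R -> R) (c : R) : R :=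
  c ^ (S (S (S k))) * (Rpower (phi c) p * phi c) + n * c ^ (S (S k)) * phi c * D1 c
  + n / (n - 2) * c ^ (S (S (S k))) * D1 c ^ 2.

Lemma Q_nonneg k n p R1 phi D1 D2 r : ODEhyp k n p phi D1 D2 ->
  1 < p -> p < (n + 2) / (n - 2) -> 0 < R1 <= 1 ->
  (forall s, 0 <= s < R1 -> 0 < phi s) -> 0 <= r < R1 -> 0 <= Qf k n p phi D1 r.
Proof.
  intros HO Hp1 Hp2 HR1 Hpos Hr.
  pose proof HO as [Hn [Hphi [HD1 [H10 [Hode Hode0]]]]].
  pose proof (n_ge3 k n Hn) as Hn3.
  assert (HD1n : forall c, 0 < c < R1 -> D1 c < 0).
  { intros c Hc. apply (D1_neg k n p phi D1 D2); auto. apply Hpos; lra. lra.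
    intros c' Hc'. left; apply Hpos; lra. }
  set (Qd := fun c =>
    INR (S (S (S k))) * c ^ (S (S k)) * (Rpower (phi c) p * phi c)
    + c ^ (S (S (S k))) * ((p * Rpower (phi c) (p - 1) * D1 c) * phi c + Rpower (phi c) p * D1 c)
    + n * (INR (S (S k)) * c ^ (S k) * phi c * D1 c + c ^ (S (S k)) * D1 c * D1 c
           + c ^ (S (S k)) * phi c * D2 c)
    + n / (n - 2) * (INR (S (S (S k))) * c ^ (S (S k)) * D1 c ^ 2
           + c ^ (S (S (S k))) * (2 * D1 c * D2 c))).
  assert (HQd : forall c, 0 <= c < R1 -> derivable_pt_lim (Qf k n p phi D1) c (Qd c)).
  { intros c Hc. assert (Hc1 : Rabs c < 1) by (rewrite Rabs_pos_eq; lra).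
    pose proof (Hpos c Hc) as Hpc.
    unfold Qf. eapply D_eq.
    - apply D_plus; [apply D_plus|].
      + apply D_mul; [apply (D_pow (fun t => t)); apply D_id|].
        apply D_mul; [apply D_rpow; auto| auto].
      + apply D_mul; [apply D_mul; [apply D_mul; [apply D_const| apply (D_pow (fun t => t)); apply D_id]|auto]| auto].
      + apply D_mul; [apply D_mul; [apply D_const| apply (D_pow (fun t => t)); apply D_id]|].
        apply D_pow; auto.
    - unfold Qd. simpl. ring. }
  assert (HQpos : forall c, 0 < c < R1 -> 0 <= Qd c).
  { intros c Hc. pose proof (Hpos c ltac:(lra)) as Hpc. pose proof (HD1n c Hc) as Hd.
    assert (Hc1 : 0 < c < 1) by lra.
    assert (HD2 : D2 c = - (n - 1) * (D1 c / c) - Rpower (phi c) p).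
    { pose proof (Hode c Hc1) as E. rewrite Rpower_abs_mul in E by auto. lra. }
    assert (HB : Rpower (phi c) (p - 1) = Rpower (phi c) p / phi c).
    { rewrite <- (Rpower_abs_mul (phi c) p) by auto. rewrite Rabs_pos_eq by lra. field. lra. }
    assert (E : Qd c = (p - (n + 2) / (n - 2)) * c ^ (S (S (S k))) * Rpower (phi c) p * D1 c).
    { unfold Qd. rewrite HD2, HB.
      replace (INR (S (S (S k)))) with n by auto.
      replace (INR (S (S k))) with (n - 1) by (rewrite Hn, (S_INR (S (S k))); ring).
      cbn [pow]. field. split; lra. }
    rewrite E. pose proof (Rpower_pos (phi c) p).
    assert (0 < c ^ (S (S (S k)))) by (apply pow_lt; lra).
    assert (0 < (n + 2) / (n - 2) - p) by lra.
    assert (0 < ((n + 2) / (n - 2) - p) * c ^ S (S (S k)) * Rpower (phi c) p) by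
      (apply Rmult_lt_0_compat; [apply Rmult_lt_0_compat|]; auto).
    nra. }
  replace 0 with (Qf k n p phi D1 0) by (unfold Qf; simpl; ring).
  apply (mono_le _ Qd 0 r); [lra| |].
  - intros c Hc. apply HQd. lra.
  - intros c Hc. apply HQpos. lra.
Qed.

Lemma ln_le_mono x y : 0 < x -> x <= y -> ln x <= ln y.
Proof.
  intros Hx Hxy. destruct (Rle_lt_or_eq_dec _ _ Hxy) as [H|H].
  - left; apply ln_increasing; auto.
  - rewrite H; lra.
Qed.

Lemma exp_le_mono x y : x <= y -> exp x <= exp y.
Proof.
  intros Hxy. destruct (Rle_lt_or_eq_dec _ _ Hxy) as [H|H].
  - left; apply exp_increasing; auto.
  - rewrite H; lra.
Qed.

Lemma core k n p R1 phi D1 D2 : ODEhyp k n p phi D1 D2 ->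
  1 < p -> p < (n + 2) / (n - 2) -> 0 < R1 <= 1 ->
  (forall s, 0 <= s < R1 -> 0 < phi s) ->
  forall r, 0 <= r < R1 ->
  phi r <= phi 0 / Rpower (1 + Rpower (phi 0) (p - 1) / (n * (n - 2)) * r ^ 2) ((n - 2) / 2).
Proof.
  intros HO Hp1 Hp2 HR1 Hpos.
  pose proof HO as [Hn [Hphi [HD1 [H10 [Hode Hode0]]]]].
  pose proof (n_ge3 k n Hn) as Hn3.
  assert (HM : 0 < phi 0) by (apply Hpos; lra).
  set (M := phi 0) in *.
  set (b := n / (n - 2)).
  set (G := fun c => (-1 * D1 c) / (c * Rpower (phi c) b)).
  set (Gd := fun c => ((0 * D1 c + -1 * D2 c) * (c * Rpower (phi c) b)
      - (1 * Rpower (phi c) b + c * (b * Rpower (phi c) (b - 1) * D1 c)) * (-1 * D1 c))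
      / (c * Rpower (phi c) b) ^ 2).
  assert (HGd : forall c, 0 < c < R1 -> derivable_pt_lim G c (Gd c)).
  { intros c Hc. assert (Hc1 : Rabs c < 1) by (rewrite Rabs_pos_eq; lra).
    pose proof (Hpos c ltac:(lra)) as Hpc. pose proof (Rpower_pos (phi c) b).
    eapply D_eq; [apply (D_div (fun t => -1 * D1 t) (fun t => t * Rpower (phi t) b))|].
    - apply Rgt_not_eq. apply Rmult_lt_0_compat; lra.
    - apply D_mul; [apply D_const| auto].
    - apply D_mul; [apply D_id| apply D_rpow; auto].
    - unfold Gd. reflexivity. }
  assert (HGpos : forall c, 0 < c < R1 -> 0 <= Gd c).
  { intros c Hc. pose proof (Hpos c ltac:(lra)) as Hpc. pose proof (Rpower_pos (phi c) b) as HPb.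
    assert (Hc1 : 0 < c < 1) by lra.
    assert (HD2 : D2 c = - (n - 1) * (D1 c / c) - Rpower (phi c) p).
    { pose proof (Hode c Hc1) as E. rewrite Rpower_abs_mul in E by auto. lra. }
    assert (HB : Rpower (phi c) (b - 1) = Rpower (phi c) b / phi c).
    { replace b with ((b - 1) + 1) at 2 by ring. rewrite Rpower_plus, Rpower_1 by auto. field. lra. }
    pose proof (Q_nonneg k n p R1 phi D1 D2 c HO Hp1 Hp2 HR1 Hpos ltac:(lra)) as HQ.
    assert (E : Gd c = Qf k n p phi D1 c * Rpower (phi c) b
                 / (phi c * c ^ (S (S k)) * (c * Rpower (phi c) b) ^ 2)).
    { assert (Hck : c ^ k <> 0) by (apply pow_nonzero; lra). pose proof HPb as HPb'. unfold b in HPb'.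
      unfold Gd, Qf. rewrite HD2, HB. unfold b. cbn [pow]. field.
      repeat split; try lra; auto. }
    rewrite E. apply Rmult_le_pos; [apply Rmult_le_pos; lra|].
    left; apply Rinv_0_lt_compat.
    repeat apply Rmult_lt_0_compat; auto; try (apply pow_lt; lra); lra. }
  assert (HGmono : forall s r, 0 < s <= r -> r < R1 -> G s <= G r).
  { intros s r Hs Hr. apply (mono_le G Gd s r); [lra| |].
    - intros c Hc; apply HGd; lra.
    - intros c Hc; apply HGpos; lra. }
  set (G0 := - D2 0 * Rpower M (- b)).
  set (kf := fun c => (-1 * D1 c) * Rpower (phi c) (- b)).
  assert (Hkf : derivable_pt_lim kf 0 G0).
  { eapply D_eq.
    - apply D_mul; [apply D_mul; [apply D_const| apply HD1; rewrite Rabs_R0; lra]|].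
      apply D_rpow; [auto| apply Hphi; rewrite Rabs_R0; lra].
    - unfold G0, M. rewrite H10. ring. }
  assert (HkG : forall c, 0 < c < R1 -> kf c / c = G c).
  { intros c Hc. pose proof (Hpos c ltac:(lra)) as Hpc. pose proof (Rpower_pos (phi c) b) as HPb.
    unfold kf, G. rewrite Rpower_opp. field. split; lra. }
  assert (HG0 : forall r, 0 < r < R1 -> G0 <= G r).
  { intros r Hr. destruct (Rle_or_lt G0 (G r)) as [H|H]; auto. exfalso.
    destruct (Hkf (G0 - G r) ltac:(lra)) as [d Hd].
    set (h := Rmin (d / 2) r).
    assert (Hh : 0 < h <= r) by (unfold h; split; [apply Rmin_pos; [destruct d; simpl; lra| lra]| apply Rmin_r]).
    assert (Hhd : Rabs h < d) by (rewrite Rabs_pos_eq by lra; unfold h;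
       apply Rle_lt_trans with (d / 2); [apply Rmin_l| destruct d; simpl; lra]).
    specialize (Hd h ltac:(lra) Hhd). rewrite Rplus_0_l in Hd.
    assert (Hk0 : kf 0 = 0) by (unfold kf; rewrite H10; ring).
    rewrite Hk0, Rminus_0_r, HkG in Hd by lra.
    apply Rabs_def2 in Hd. pose proof (HGmono h r Hh ltac:(lra)). lra. }
  set (e := 2 / (n - 2)).
  set (Z := fun c => Rpower (phi c) (- e) - G0 / (n - 2) * c ^ 2).
  set (Zd := fun c => - e * Rpower (phi c) (- e - 1) * D1 c - G0 / (n - 2) * (INR 2 * c ^ 1 * 1)).
  assert (HZd : forall c, 0 <= c < R1 -> derivable_pt_lim Z c (Zd c)).
  { intros c Hc. assert (Hc1 : Rabs c < 1) by (rewrite Rabs_pos_eq; lra).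
    pose proof (Hpos c Hc) as Hpc.
    unfold Z. eapply D_eq; [apply D_minus; [apply D_rpow; auto|]|].
    - apply D_mul; [apply D_const|]. apply (D_pow (fun t => t)). apply D_id.
    - unfold Zd. cbn [Nat.pred]. ring. }
  assert (HZpos : forall c, 0 < c < R1 -> 0 <= Zd c).
  { intros c Hc. pose proof (Hpos c ltac:(lra)) as Hpc. pose proof (Rpower_pos (phi c) b) as HPb.
    assert (E : Zd c = e * c * (G c - G0)).
    { unfold Zd, G. replace (- e - 1) with (- b) by (unfold e, b; field; lra).
      rewrite Rpower_opp. cbv beta. replace (INR 2 * c ^ 1 * 1) with (2 * c) by (simpl; ring). unfold e. field. split; lra. }
    rewrite E. pose proof (HG0 c Hc). assert (0 < e) by (unfold e; apply Rdiv_lt_0_compat; lra).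
    apply Rmult_le_pos; [apply Rmult_le_pos|]; lra. }
  intros r Hr.
  assert (HZ : Z 0 <= Z r).
  { apply (mono_le Z Zd 0 r); [lra| |].
    - intros c Hc; apply HZd; lra.
    - intros c Hc; apply HZpos; lra. }
  unfold Z in HZ. replace (0 ^ 2) with 0 in HZ by ring. fold M in HZ.
  assert (HD20 : - D2 0 = Rpower M p / n).
  { rewrite Rpower_abs_mul in Hode0 by auto. rewrite <- Hode0. field. lra. }
  assert (HG0v : G0 / (n - 2) = Rpower M (- e) * (Rpower M (p - 1) / (n * (n - 2)))).
  { unfold G0. rewrite HD20.
    replace (Rpower M p) with (Rpower M (p - 1) * Rpower M 1) by
      (rewrite <- Rpower_plus; f_equal; ring).
    rewrite Rpower_1 by auto.
    replace (- b) with (- e + - (1)) by (unfold e, b; field; lra).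
    rewrite Rpower_plus. rewrite (Rpower_opp M 1), Rpower_1 by auto. field. split; lra. }
  set (T := 1 + Rpower M (p - 1) / (n * (n - 2)) * r ^ 2).
  assert (HT : 1 <= T).
  { unfold T. pose proof (Rpower_pos M (p - 1)).
    assert (0 <= Rpower M (p - 1) / (n * (n - 2))) by (left; apply Rdiv_lt_0_compat; nra).
    assert (0 <= r ^ 2) by (apply pow2_ge_0). nra. }
  assert (H1 : Rpower M (- e) * T <= Rpower (phi r) (- e)).
  { unfold T. rewrite HG0v in HZ. lra. }
  pose proof (Hpos r Hr) as Hpr.
  assert (H2 : ln (Rpower M (- e) * T) <= ln (Rpower (phi r) (- e))).
  { apply ln_le_mono; auto. apply Rmult_lt_0_compat; [apply Rpower_pos| lra]. }
  rewrite ln_mult, !ln_Rpower in H2 by (try apply Rpower_pos; lra).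
  assert (H3 : ln (phi r) <= ln M - (n - 2) / 2 * ln T).
  { assert (0 < e) by (unfold e; apply Rdiv_lt_0_compat; lra).
    assert (Hinv : (n - 2) / 2 = / e) by (unfold e; field; lra).
    rewrite Hinv.
    apply Rmult_le_reg_l with e; auto.
    replace (e * (ln M - / e * ln T)) with (e * ln M - ln T) by (field; lra). lra. }
  rewrite <- (exp_ln (phi r)) by auto.
  unfold Rdiv. rewrite <- Rpower_opp. unfold Rpower. rewrite <- (exp_ln M) at 1 by auto.
  rewrite <- exp_plus. apply exp_le_mono. lra.
Qed.


Definition cl (t : R) : R := Rmax 0 (Rmin 1 t).

Lemma cl_lip a b : Rabs (cl a - cl b) <= Rabs (a - b).
Proof. unfold cl, Rmax, Rmin. repeat destruct Rle_dec; split_Rabs; lra. Qed.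

Lemma cl_id t : 0 <= t <= 1 -> cl t = t.
Proof. intros. unfold cl, Rmax, Rmin. repeat destruct Rle_dec; lra. Qed.

Lemma cl_range t : 0 <= cl t <= 1.
Proof. unfold cl, Rmax, Rmin. repeat destruct Rle_dec; lra. Qed.

Lemma rsum_small n (h : nat -> R -> R) t :
  (forall k, (k < n)%nat -> contR (h k) t) ->
  forall eps, eps > 0 -> exists eta, eta > 0 /\ forall t', Rabs (t' - t) < eta ->
    rsum n (fun k => (h k t' - h k t) ^ 2) < eps.
Proof.
  induction n; intros Hc eps Heps.
  - exists 1; split; [lra|]. intros; simpl; lra.
  - destruct (IHn (fun k Hk => Hc k ltac:(lia)) (eps / 2) ltac:(lra)) as [e1 [He1 H1]].
    destruct (Hc n ltac:(lia) (sqrt (eps / 2)) ltac:(apply sqrt_lt_R0; lra)) as [e2 [He2 H2]].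
    exists (Rmin e1 e2); split; [apply Rmin_pos; lra|]. intros t' Ht'.
    cbn [rsum]. specialize (H1 t' ltac:(apply Rlt_le_trans with (1 := Ht'); apply Rmin_l)).
    specialize (H2 t' ltac:(apply Rlt_le_trans with (1 := Ht'); apply Rmin_r)).
    assert ((h n t' - h n t) ^ 2 < eps / 2).
    { rewrite <- (pow2_abs (h n t' - h n t)).
      replace (eps / 2) with (sqrt (eps / 2) ^ 2) by (rewrite pow2_sqrt; lra).
      pose proof (Rabs_pos (h n t' - h n t)). nra. }
    lra.
Qed.

Lemma u_ext N u x y : HRad N u -> (forall k, (k < N)%nat -> x k = y k) -> u x = u y.
Proof. intros H Hxy. rewrite (H x), (H y), (normN_ext N x y); auto. Qed.

Lemma path_F N u x y : HRad N u -> (forall z, in_cball N z -> contN_cball_at N u z) ->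
  path_connected_in N (nodal_set N u) x y ->
  exists F : R -> R, (forall t, continuity_pt F t) /\ F 0 = u x /\ F 1 = u y /\ (forall t, F t <> 0).
Proof.
  intros HR Hc [g [Hg [Hends Hin]]].
  exists (fun t => u (g (cl t))). split; [|split; [|split]].
  - intros t. apply contR_pt. intros eps Heps.
    destruct (Hin (cl t) (cl_range t)) as [Hb _].
    destruct (Hc (g (cl t)) ltac:(unfold in_cball; unfold in_ball in Hb; lra) eps Heps) as [d [Hd Hd']].
    destruct (rsum_small N (fun k s => g (cl s) k) t) with (eps := d ^ 2) as [eta [Heta Heta']].
    + intros k Hk e He. specialize (Hg k Hk (cl t)). apply contR_pt in Hg.
      destruct (Hg e He) as [d2 [Hd2 Hd2']]. exists d2; split; auto.
      intros y0 Hy0. apply Hd2'. apply Rle_lt_trans with (1 := cl_lip y0 t). auto.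
    + apply pow_lt; lra.
    + exists eta; split; auto. intros t' Ht'. apply Hd'.
      * destruct (Hin (cl t') (cl_range t')) as [Hb' _]. unfold in_cball; unfold in_ball in Hb'; lra.
      * unfold distN, normN. specialize (Heta' t' Ht'). cbv beta in Heta'.
        rewrite <- (sqrt_pow2 d) by lra. apply sqrt_lt_1_alt. split; auto.
        apply rsum_nonneg. intros; apply pow2_ge_0.
  - rewrite cl_id by lra. apply (u_ext N); auto. intros k Hk; apply Hends; auto.
  - rewrite cl_id by lra. apply (u_ext N); auto. intros k Hk; apply Hends; auto.
  - intros t. destruct (Hin (cl t) (cl_range t)) as [_ H]; auto.
Qed.

Lemma path_sign N u x y : HRad N u -> (forall z, in_cball N z -> contN_cball_at N u z) ->
  path_connected_in N (nodal_set N u) x y -> 0 < u x -> 0 < u y.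
Proof.
  intros HR Hc Hp Hx. destruct (path_F N u x y HR Hc Hp) as [F [HF [H0 [H1 Hnz]]]].
  destruct (Rlt_or_le 0 (u y)) as [H|H]; auto. exfalso.
  destruct (Rle_lt_or_eq_dec _ _ H) as [Hlt|Heq].
  - destruct (Ranalysis5.IVT_interv (fun t => - F t) 0 1) as [z [Hz Hz']].
    + intros a _. apply continuity_pt_opp. auto.
    + lra.
    + lra.
    + lra.
    + apply (Hnz z). lra.
  - apply (Hnz 1). lra.
Qed.

Lemma path_sign' N u x y : HRad N u -> (forall z, in_cball N z -> contN_cball_at N u z) ->
  path_connected_in N (nodal_set N u) x y -> u x < 0 -> u y < 0.
Proof.
  intros HR Hc Hp Hx. destruct (path_F N u x y HR Hc Hp) as [F [HF [H0 [H1 Hnz]]]].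
  destruct (Rlt_or_le (u y) 0) as [H|H]; auto. exfalso.
  destruct (Rle_lt_or_eq_dec _ _ H) as [Hlt|Heq].
  - destruct (Ranalysis5.IVT_interv F 0 1) as [z [Hz Hz']]; auto; try lra.
    apply (Hnz z). lra.
  - apply (Hnz 1). lra.
Qed.


Theorem proposition3p5 :
  forall (N m : nat) (p : R) (u : pt -> R) (r1 : R),
    (3 <= N)%nat -> (1 <= m)%nat -> 1 < p -> p < p_S N ->
    is_LE_solution N p u -> radial N u ->
    num_nodal_regions N u m -> u origin > 0 ->
    first_nodal_radius N u m r1 ->
    forall x, normN N x < r1 ->
      Rabs (u x) <=
        u origin /
        Rpower (1 + Rpower (u origin) (p - 1) / (INR N * (INR N - 2)) * (normN N x) ^ 2)
               ((INR N - 2) / 2).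
Proof.
  intros N m p u r1 HN Hm Hp1 Hp2 Hsol Hrad Hnod H0 Hr1 x Hx.
  destruct Hsol as [Hbd [Hcont [d1 [d2 HD]]]].
  assert (HR : HRad N u).
  { destruct Hrad as [ph Hph]. intros z. rewrite (Hph z), (Hph (ray _)), normN_ray by lia.
    rewrite Rabs_pos_eq by apply normN_nonneg. reflexivity. }
  assert (HD' : HDer N p u d1 d2) by exact HD.
  assert (HN1 : (1 <= N)%nat) by lia.
  set (k := (N - 3)%nat).
  assert (HO : ODEhyp k (INR N) p (fun r => u (ray r)) (fun r => d1 0%nat (ray r))
                 (fun r => d2 0%nat 0%nat (ray r))).
  { split; [f_equal; unfold k; lia|].
    split; [intros r Hr; apply (dphi N p u d1 d2); auto|].
    split; [intros r Hr; apply (dD1 N p u d1 d2); auto|].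
    split; [apply (D1_0 N p u d1 d2); auto|].
    split.
    - intros r Hr. rewrite <- (ode_ray N p u d1 d2 r) by auto.
      rewrite minus_INR by lia. reflexivity.
    - apply (ode_0 N p u d1 d2); auto. }
  assert (Hp2' : p < (INR N + 2) / (INR N - 2)) by (unfold p_S in Hp2; auto).
  assert (Hu0 : u (ray 0) > 0) by (rewrite <- origin_ray; auto).
  assert (Hphi : forall r, Rabs r < 1 -> derivable_pt_lim (fun s => u (ray s)) r (d1 0%nat (ray r)))
    by (intros; apply (dphi N p u d1 d2); auto).
  assert (HR1 : 0 < r1 <= 1).
  { destruct Hr1 as [[_ ->]|[_ [H1 _]]]; lra. }
  assert (Hpos : forall s, 0 <= s < r1 -> 0 < u (ray s)).
  { destruct Hr1 as [[Hm1 Hr1e] | [Hm2 [Hr1b [Hnz Hz]]]].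
    - subst r1 m. intros s Hs.
      destruct (Rlt_or_le 0 (u (ray s))) as [Hps|Hle]; auto. exfalso.
      assert (Hex : exists s', 0 <= s' < 1 /\ u (ray s') < 0).
      { destruct (classic (exists s', 0 <= s' < 1 /\ u (ray s') < 0)) as [E|NE]; auto. exfalso.
        assert (Hnn : forall c, 0 <= c < 1 -> 0 <= u (ray c)).
        { intros c Hc. destruct (Rle_or_lt 0 (u (ray c))); auto. exfalso; apply NE; exists c; auto. }
        assert (Hs0 : u (ray s) = 0) by (pose proof (Hnn s Hs); lra).
        assert (Hspos : 0 < s) by (destruct (Rle_lt_or_eq_dec 0 s ltac:(lra)) as [H|H]; auto;
                                    subst s; lra).
        assert (HD1s : d1 0%nat (ray s) < 0).
        { apply (D1_neg k (INR N) p (fun r => u (ray r)) (fun r => d1 0%nat (ray r))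
                  (fun r => d2 0%nat 0%nat (ray r)) s); auto. lra.
          intros c Hc; apply Hnn; lra. }
        destruct (Hphi s ltac:(rewrite Rabs_pos_eq; lra) (- d1 0%nat (ray s) / 2) ltac:(lra)) as [d Hd].
        set (h := Rmin (d / 2) ((1 - s) / 2)).
        assert (Hh : 0 < h) by (unfold h; apply Rmin_pos; [destruct d; simpl; lra| lra]).
        assert (Hh1 : h <= (1 - s) / 2) by apply Rmin_r.
        assert (Hhd : Rabs h < d) by (rewrite Rabs_pos_eq by lra; unfold h;
          apply Rle_lt_trans with (d / 2); [apply Rmin_l| destruct d; simpl; lra]).
        specialize (Hd h ltac:(lra) Hhd). rewrite Hs0 in Hd. apply Rabs_def2 in Hd.
        pose proof (Hnn (s + h) ltac:(lra)).
        assert (u (ray (s + h)) / h >= 0) by (apply Rle_ge; unfold Rdiv; apply Rmult_le_pos; [lra| left; apply Rinv_0_lt_compat; lra]).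
        replace ((u (ray (s + h)) - 0) / h) with (u (ray (s + h)) / h) in Hd by (field; lra).
        lra. }
      destruct Hex as [s' [Hs' Hneg]].
      destruct Hnod as [reps [Hreps [_ Hcover]]].
      assert (Hc' : forall z, in_cball N z -> contN_cball_at N u z) by auto.
      assert (Hb0 : nodal_set N u origin).
      { split; [unfold in_ball; rewrite origin_ray, normN_ray by auto; rewrite Rabs_R0; lra| lra]. }
      destruct (Hcover origin Hb0) as [k0 [Hk0 Hp0]].
      assert (Hk00 : k0 = 0%nat) by lia. subst k0.
      pose proof (path_sign N u _ _ HR Hc' Hp0 H0) as Hr0.
      assert (Hbs : nodal_set N u (ray s')).
      { split; [apply in_ball_ray; auto; rewrite Rabs_pos_eq; lra| lra]. }
      destruct (Hcover _ Hbs) as [k1 [Hk1 Hp1']].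
      assert (Hk10 : k1 = 0%nat) by lia. subst k1.
      pose proof (path_sign' N u _ _ HR Hc' Hp1' Hneg). lra.
    - intros s Hs.
      destruct (Rlt_or_le 0 (u (ray s))) as [Hps|Hle]; auto. exfalso.
      assert (Hns : u (ray s) <> 0) by (apply Hnz; rewrite normN_ray by auto; rewrite Rabs_pos_eq by lra; lra).
      assert (Hspos : 0 < s) by (destruct (Rle_lt_or_eq_dec 0 s ltac:(lra)) as [H|H]; auto;
                                  subst s; lra).
      destruct (Ranalysis5.IVT_interv (fun t => - u (ray t)) 0 s) as [z [Hzz Hzz']].
      + intros a Ha. apply continuity_pt_opp. apply derivable_continuous_pt.
        exists (d1 0%nat (ray a)). apply Hphi. rewrite Rabs_pos_eq; lra.
      + auto.
      + lra.
      + lra.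
      + apply (Hnz (ray z)); [rewrite normN_ray by auto; rewrite Rabs_pos_eq by lra; lra| cbv beta in Hzz'; lra]. }
  pose proof (core k (INR N) p r1 _ _ _ HO Hp1 Hp2' HR1 Hpos (normN N x)
                ltac:(split; [apply normN_nonneg| auto])) as Hc.
  cbv beta in Hc. rewrite <- origin_ray in Hc. rewrite (HR x).
  rewrite Rabs_pos_eq; auto. left. apply Hpos. split; [apply normN_nonneg| auto].
Qed.
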